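(* Let $d>K\ge1$, $\mathbf Q\in\mathrm{St}(d,K)$, $\lambda_1>\dots>\lambda_K>0$, $\boldsymbol\Theta=\mathrm{diag}(\sqrt{\lambda_1},\dots,\sqrt{\lambda_K})$, $a_1>\dots>a_K>0$, $g(\mathbf X)=\mathrm{tr}(\mathbf X^\top\mathbf Q\boldsymbol\Theta^2\mathbf Q^\top\mathbf X\,\mathrm{diag}(a_1,\dots,a_K))$. Let $\delta_3\in(0,\tfrac{\sqrt2}{2})$ and $\eta>0$ be such that $d_F(\mathbf X,\mathbf Q)\le\eta\|\mathrm{grad}\,g(\mathbf X)\|_F$ for all $\mathbf X\in\mathrm{St}(d,K)$ with $d_F(\mathbf X,\mathbf Q)\le\delta_3$. Then there exists $\beta_1\in(0,\tfrac23\delta_3)$ such that $$g(\mathbf Q)-g(\mathbf X)\ge\frac{1}{4\eta}d_F^2(\mathbf X,\mathbf Q)\quad\text{for all }\mathbf X\in\mathrm{St}(d,K)\text{ with }d_F(\mathbf X,\mathbf Q)\le\beta_1.$$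
   Context: $\mathrm{St}(d,K)=\{\mathbf X\in\mathbb R^{d\times K}:\mathbf X^\top\mathbf X=\mathbf I_K\}$. $d_F(\mathbf X,\mathbf Q)=\min_{\mathbf q\in\{1,-1\}^K}\|\mathbf X-\mathbf Q\,\mathrm{diag}(\mathbf q)\|_F$. $\nabla g(\mathbf X)=2\mathbf Q\boldsymbol\Theta^2\mathbf Q^\top\mathbf X\,\mathrm{diag}(a_1,\dots,a_K)$ is the Euclidean gradient and $\mathrm{grad}\,g(\mathbf X)=(\mathbf I_d-\tfrac12\mathbf X\mathbf X^\top)(\nabla g(\mathbf X)-\mathbf X\nabla g(\mathbf X)^\top\mathbf X)$. (Such $\delta_3,\eta$ are known to exist.) *)

(* Defs.v *)
From HB Require Import structures.
From mathcomp Require Import all_boot all_order all_algebra.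
From mathcomp Require Import reals.
Set Implicit Arguments. Unset Strict Implicit. Unset Printing Implicit Defensive.
Import Order.TTheory GRing.Theory Num.Theory.
Local Open Scope ring_scope.

Section Defs.
Variable R : realType.

Definition stiefel (d K : nat) (X : 'M[R]_(d, K)) : Prop := X^T *m X = 1%:M.

Definition frob (m n : nat) (A : 'M[R]_(m, n)) : R :=
  Num.sqrt (\sum_(i < m) \sum_(j < n) (A i j) ^+ 2).

Definition signvec (K : nat) (q : {ffun 'I_K -> bool}) : 'rV[R]_K :=
  \row_i (if q i then -1 else 1).

Definition dF (d K : nat) (X Q : 'M[R]_(d, K)) : R :=
  \big[Order.min/frob (X - Q)]_(q : {ffun 'I_K -> bool})
      frob (X - Q *m diag_mx (signvec q)).

Definition Theta (K : nat) (lam : 'I_K -> R) : 'M[R]_K :=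
  diag_mx (\row_i Num.sqrt (lam i)).

Definition diagA (K : nat) (a : 'I_K -> R) : 'M[R]_K := diag_mx (\row_i a i).

Definition gfun (d K : nat) (Q : 'M[R]_(d, K)) (lam a : 'I_K -> R)
  (X : 'M[R]_(d, K)) : R :=
  \tr (X^T *m Q *m (Theta lam *m Theta lam) *m Q^T *m X *m diagA a).

Definition egrad (d K : nat) (Q : 'M[R]_(d, K)) (lam a : 'I_K -> R)
  (X : 'M[R]_(d, K)) : 'M[R]_(d, K) :=
  2%:R *: (Q *m (Theta lam *m Theta lam) *m Q^T *m X *m diagA a).

Definition rgrad (d K : nat) (Q : 'M[R]_(d, K)) (lam a : 'I_K -> R)
  (X : 'M[R]_(d, K)) : 'M[R]_(d, K) :=
  (1%:M - 2%:R^-1 *: (X *m X^T)) *m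
    (egrad Q lam a X - X *m (egrad Q lam a X)^T *m X).

End Defs.

(* Main.v *)
Require Import Defs.
From HB Require Import structures.
From mathcomp Require Import all_boot all_order all_algebra.
From mathcomp Require Import reals.
From mathcomp Require Import ring lra.
Import Order.TTheory GRing.Theory Num.Theory.
Local Open Scope ring_scope.
Lemma abs_le_of_sq {R : realType} {s tau : R} : 0 <= tau -> s ^+ 2 <= tau ^+ 2 -> `|s| <= tau.
Proof.
move=> t0 h; have n0 := normr_ge0 s; have e := real_normK (num_real s).
rewrite -e in h; nra.
Qed.

Lemma sq_diff_lb {R : realType} {s t wii wkk tau T : R} :
  wii ^+ 2 <= 1 -> wkk ^+ 2 <= 1 -> `|wkk * s + wii * t| <= T ->
  s ^+ 2 <= tau ^+ 2 -> t ^+ 2 <= tau ^+ 2 -> 1 - wii ^+ 2 <= tau ^+ 2 ->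
  t ^+ 2 <= T -> 0 <= tau <= 1 ->
  - (3 * tau * T) <= s ^+ 2 - t ^+ 2.
Proof.
move=> hi hk hr hs ht hw htT /andP[t0 t1].
have T0 : 0 <= T by apply: le_trans hr.
have as_ := abs_le_of_sq t0 hs.
have at_ := abs_le_of_sq t0 ht.
have ai : `|wii| <= 1 by apply: abs_le_of_sq; rewrite ?expr1n.
have ak : `|wkk| <= 1 by apply: abs_le_of_sq; rewrite ?expr1n.
have e : s ^+ 2 - t ^+ 2 = (wkk * s - wii * t) * (wkk * s + wii * t)
   + (1 - wkk ^+ 2) * s ^+ 2 - (1 - wii ^+ 2) * t ^+ 2 by ring.
have h1 : `|wkk * s - wii * t| <= 2 * tau.
  apply: le_trans (ler_normB _ _) _; rewrite !normrM.
  have : `|wkk| * `|s| <= tau by rewrite -[tau]mul1r; apply: ler_pM.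
  have : `|wii| * `|t| <= tau by rewrite -[tau]mul1r; apply: ler_pM.
  lra.
have h2 : `|(wkk * s - wii * t) * (wkk * s + wii * t)| <= 2 * tau * T.
  by rewrite normrM; apply: ler_pM.
have h3 : - (2 * tau * T) <= (wkk * s - wii * t) * (wkk * s + wii * t).
  by move: h2; rewrite ler_norml => /andP[].
have h4 : 0 <= (1 - wkk ^+ 2) * s ^+ 2 by apply: mulr_ge0; rewrite ?subr_ge0 ?sqr_ge0.
have h5 : (1 - wii ^+ 2) * t ^+ 2 <= tau * T.
  have : (1 - wii ^+ 2) * t ^+ 2 <= tau ^+ 2 * T.
    apply: ler_pM => //; rewrite ?subr_ge0 ?sqr_ge0 //.
  have : tau ^+ 2 * T <= tau * T by apply: ler_wpM2r => //; rewrite expr2; nra.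
  lra.
rewrite e; lra.
Qed.

Lemma pair_ineq {R : realType} (L ai ak s t wii wkk tau T c0 lmax amax : R) :
  0 < L -> L <= lmax -> 0 <= ai <= amax -> 0 <= ak <= amax ->
  4 * c0 <= L * (ai - ak) ->
  wii ^+ 2 <= 1 -> wkk ^+ 2 <= 1 -> `|wkk * s + wii * t| <= T ->
  s ^+ 2 <= tau ^+ 2 -> t ^+ 2 <= tau ^+ 2 -> 1 - wii ^+ 2 <= tau ^+ 2 ->
  t ^+ 2 <= T -> 0 <= tau <= 1 ->
  2 * c0 * (s ^+ 2 + t ^+ 2) - 3 * lmax * amax * tau * T <= L * (ai * s ^+ 2 - ak * t ^+ 2).
Proof.
move=> L0 Ll /andP[ai0 aim] /andP[ak0 akm] hc hi hk hr hs ht hw htT ht01.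
have hd := sq_diff_lb hi hk hr hs ht hw htT ht01.
case/andP: ht01 => t0 t1.
have T0 : 0 <= T by apply: le_trans hr.
have e : L * (ai * s ^+ 2 - ak * t ^+ 2) =
  L * (ai - ak) / 2 * (s ^+ 2 + t ^+ 2) + L * (ai + ak) / 2 * (s ^+ 2 - t ^+ 2).
  by field.
rewrite e.
have s0 : 0 <= s ^+ 2 + t ^+ 2 by rewrite addr_ge0 ?sqr_ge0.
have h1 : 2 * c0 * (s ^+ 2 + t ^+ 2) <= L * (ai - ak) / 2 * (s ^+ 2 + t ^+ 2).
  by apply: ler_wpM2r => //; lra.
have h2 : - (L * (ai + ak) / 2 * (3 * tau * T)) <= L * (ai + ak) / 2 * (s ^+ 2 - t ^+ 2).
  rewrite -mulrN; apply: ler_wpM2l => //.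
  apply: divr_ge0 => //; apply: mulr_ge0; lra.
have h3 : L * (ai + ak) / 2 * (3 * tau * T) <= 3 * lmax * amax * tau * T.
  have q0 : 0 <= 3 * tau * T by apply: mulr_ge0 => //; lra.
  have : L * (ai + ak) / 2 <= lmax * amax.
    have : (ai + ak) / 2 <= amax by lra.
    move=> h; rewrite -mulrA; apply: ler_pM => //; lra.
  move=> h; have := ler_wpM2r q0 h; lra.
lra.
Qed.
Lemma sum_cross_bound {R : realType} (I : finType) (P : pred I) (x y : I -> R) :
  `|\sum_(m | P m) x m * y m| <= (\sum_(m | P m) x m ^+ 2 + \sum_(m | P m) y m ^+ 2) / 2.
Proof.
have e1 : \sum_(m | P m) (x m + y m) ^+ 2 =
   \sum_(m | P m) x m ^+ 2 + \sum_(m | P m) y m ^+ 2 + 2 * \sum_(m | P m) x m * y m.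
  rewrite mulr_sumr -!big_split /=; apply: eq_bigr => m _; ring.
have e2 : \sum_(m | P m) (x m - y m) ^+ 2 =
   \sum_(m | P m) x m ^+ 2 + \sum_(m | P m) y m ^+ 2 - 2 * \sum_(m | P m) x m * y m.
  rewrite mulr_sumr -big_split -sumrB /=; apply: eq_bigr => m _; ring.
have p1 : 0 <= \sum_(m | P m) (x m + y m) ^+ 2 by apply: sumr_ge0 => m _; exact: sqr_ge0.
have p2 : 0 <= \sum_(m | P m) (x m - y m) ^+ 2 by apply: sumr_ge0 => m _; exact: sqr_ge0.
rewrite ler_norml; apply/andP; split; lra.
Qed.
Lemma le_sum_term {R : realType} (I : finType) (F : I -> R) (j : I) :
  (forall i, 0 <= F i) -> F j <= \sum_i F i.
Proof.
move=> h; rewrite (bigD1 j) //= lerDl; apply: sumr_ge0 => i _; exact: h.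
Qed.

Lemma sum_lin {R : realType} (I : finType) (f g : I -> R) (c e : R) :
  \sum_i (c * (f i + g i) - e) = c * (\sum_i f i + \sum_i g i) - #|I|%:R * e.
Proof. by rewrite sumrB -big_split mulr_sumr sumr_const mulr_natl. Qed.

Lemma partC {R : realType} (K d : nat) (W : 'M[R]_K) (V : 'M[R]_(d,K))
  (lam a : 'I_K -> R) (c0 tau : R) :
  (forall i j, \sum_m W m i * W m j + \sum_l V l i * V l j = (i == j)%:R) ->
  (forall i j : 'I_K, (i < j)%N -> lam j < lam i) -> (forall i, 0 < lam i) ->
  (forall i j : 'I_K, (i < j)%N -> a j < a i) -> (forall i, 0 < a i) ->
  0 < c0 -> (forall i, 2 * c0 <= a i * lam i) ->
  (forall i j : 'I_K, (i < j)%N -> 4 * c0 <= (lam i - lam j) * (a i - a j)) ->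
  0 <= tau <= 1 -> (forall i, 1 - W i i ^+ 2 <= tau ^+ 2) ->
  (forall i, 1/3 <= `|W i i|) ->
  3 * (K * K)%:R * (\sum_i lam i) * (\sum_i a i) * tau <= c0 ->
  c0 * \sum_i 2 * (1 - `|W i i|) <=
    \sum_i a i * lam i - \sum_i a i * \sum_k lam k * W k i ^+ 2.
Proof.
move=> hW hlam lam0 ha a0 c00 hc1 hc2 ht hWt hW3 htau.
have t0 : 0 <= tau by case/andP: ht.
pose v i := \sum_l V l i ^+ 2.
pose T i := 1 - W i i ^+ 2.
pose Ts := \sum_i T i.
pose lmax := \sum_i lam i.
pose amax := \sum_i a i.
have hv0 i : 0 <= v i by apply: sumr_ge0 => l _; exact: sqr_ge0.
have hT i : T i = \sum_(m | m != i) W m i ^+ 2 + v i.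
  have := hW i i; rewrite eqxx (bigD1 i) //= => e.
  rewrite /T /v; under eq_bigr do rewrite expr2.
  under [X in _ = _ + X]eq_bigr do rewrite expr2.
  move: e; rewrite expr2 /=; lra.
have hs0 i : 0 <= \sum_(m | m != i) W m i ^+ 2 by apply: sumr_ge0 => m _; exact: sqr_ge0.
have hT0 i : 0 <= T i by rewrite hT addr_ge0.
have hvT i : v i <= T i by rewrite hT lerDr.
have hWoff i m : m != i -> W m i ^+ 2 <= T i.
  move=> mi; rewrite hT (bigD1 m) //= -addrA lerDl addr_ge0 //.
  by apply: sumr_ge0 => n _; exact: sqr_ge0.
have hWii i : W i i ^+ 2 <= 1 by have := hT0 i; rewrite /T subr_ge0.
have hTs i : T i <= Ts by apply: le_sum_term.
have Ts0 : 0 <= Ts by apply: sumr_ge0 => i _.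
have hcross i k : i != k -> `|W k k * W k i + W i i * W i k| <= Ts.
  move=> ik.
  have := hW i k; rewrite (negbTE ik) (bigD1 i) //= (bigD1 k) //=; last by rewrite eq_sym.
  set r := \sum_(m | _) _; move=> e; rewrite ?mulr0n in e.
  have -> : W k k * W k i + W i i * W i k = - (r + \sum_l V l i * V l k).
    have e2 : W k k * W k i + W i i * W i k + (r + \sum_l V l i * V l k) = 0.
      by rewrite -[in RHS]e; ring.
    by apply/eqP; rewrite -addr_eq0 e2.
  rewrite normrN; apply: le_trans (ler_normD _ _) _.
  have b1 := sum_cross_bound _ (fun m => (m != i) && (m != k)) (fun m => W m i) (fun m => W m k).
  have b2 := sum_cross_bound _ xpredT (fun l => V l i) (fun l => V l k).
  have q1 : \sum_(m | (m != i) && (m != k)) W m i ^+ 2 <= \sum_(m | m != i) W m i ^+ 2.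
    rewrite [X in _ <= X](bigD1 k) //=; last by rewrite eq_sym.
    by rewrite lerDr sqr_ge0.
  have q2 : \sum_(m | (m != i) && (m != k)) W m k ^+ 2 <= \sum_(m | m != k) W m k ^+ 2.
    rewrite [X in _ <= X](bigD1 i) //=.
    have -> : \sum_(m | (m != k) && (m != i)) W m k ^+ 2 =
              \sum_(m | (m != i) && (m != k)) W m k ^+ 2.
      by apply: eq_bigl => m; rewrite andbC.
    by rewrite lerDr sqr_ge0.
  rewrite /r.
  have hTi := hT i; have hTk := hT k; have hti := hTs i; have htk := hTs k.
  rewrite /v in hTi hTk.
  move: b1 b2; rewrite /=.
  lra.
pose G i k := a i * (lam i - lam k) * W k i ^+ 2.
pose O i k := if k != i then W k i ^+ 2 else 0.
pose E := 3 * lmax * amax * tau * Ts.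
have lam_le i : lam i <= lmax by apply: le_sum_term => j; apply: ltW.
have a_le i : a i <= amax by apply: le_sum_term => j; apply: ltW.
have lmax0 : 0 <= lmax by apply: sumr_ge0 => i _; apply: ltW.
have amax0 : 0 <= amax by apply: sumr_ge0 => i _; apply: ltW.
have E0 : 0 <= E.
  by rewrite /E !mulr_ge0.
have hpair i k : 2 * c0 * (O i k + O k i) - E <= G i k + G k i.
  case: (eqVneq i k) => [<-|ik].
    by rewrite /O /G eqxx subrr !mulr0 mul0r addr0 mulr0 subr_le0.
  rewrite /O /G ik eq_sym ik.
  have hoff1 : W k i ^+ 2 <= tau ^+ 2 by apply: le_trans (hWoff i k _) (hWt i); rewrite eq_sym.
  have hoff2 : W i k ^+ 2 <= tau ^+ 2 by apply: le_trans (hWoff k i _) (hWt k).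
  have hoff3 : W k i ^+ 2 <= Ts by apply: le_trans (hWoff i k _) (hTs i); rewrite eq_sym.
  have hoff4 : W i k ^+ 2 <= Ts by apply: le_trans (hWoff k i _) (hTs k).
  case: (ltngtP i k) => [lt_ik|lt_ki|eq_ik].
  - have := @pair_ineq R (lam i - lam k) (a i) (a k) (W k i) (W i k) (W i i) (W k k) tau Ts c0 lmax amax.
    have L0 : 0 < lam i - lam k by rewrite subr_gt0; apply: hlam.
    have L1 : lam i - lam k <= lmax by have := lam_le i; have := lam0 k; lra.
    have A1 : 0 <= a i <= amax by rewrite a_le andbT ltW.
    have A2 : 0 <= a k <= amax by rewrite a_le andbT ltW.
    move=> /(_ L0 L1 A1 A2 (hc2 _ _ lt_ik) (hWii i) (hWii k) (hcross i k ik) hoff1 hoff2 (hWt i) hoff4 ht).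
    have -> : a i * (lam i - lam k) * W k i ^+ 2 + a k * (lam k - lam i) * W i k ^+ 2 =
       (lam i - lam k) * (a i * W k i ^+ 2 - a k * W i k ^+ 2) by ring.
    by rewrite /E.
  - have := @pair_ineq R (lam k - lam i) (a k) (a i) (W i k) (W k i) (W k k) (W i i) tau Ts c0 lmax amax.
    have L0 : 0 < lam k - lam i by rewrite subr_gt0; apply: hlam.
    have L1 : lam k - lam i <= lmax by have := lam_le k; have := lam0 i; lra.
    have A1 : 0 <= a i <= amax by rewrite a_le andbT ltW.
    have A2 : 0 <= a k <= amax by rewrite a_le andbT ltW.
    have ki : k != i by rewrite eq_sym.
    move=> /(_ L0 L1 A2 A1 (hc2 _ _ lt_ki) (hWii k) (hWii i) (hcross k i ki) hoff2 hoff1 (hWt k) hoff3 ht).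
    have -> : a i * (lam i - lam k) * W k i ^+ 2 + a k * (lam k - lam i) * W i k ^+ 2 =
       (lam k - lam i) * (a k * W i k ^+ 2 - a i * W k i ^+ 2) by ring.
    by rewrite /E (addrC (W k i ^+ 2)).
  - by move: ik; rewrite (val_inj eq_ik) eqxx.
have hgap : \sum_i a i * lam i - \sum_i a i * \sum_k lam k * W k i ^+ 2 =
    \sum_i a i * lam i * v i + \sum_i \sum_k G i k.
  rewrite -sumrB -big_split /=; apply: eq_bigr => i _.
  have e' : \sum_k W k i ^+ 2 + v i = 1.
    rewrite /v; under eq_bigr do rewrite expr2.
    under [X in _ + X = _]eq_bigr do rewrite expr2.
    by move: (hW i i); rewrite eqxx /=; lra.
  have -> : \sum_k G i k = a i * lam i * \sum_k W k i ^+ 2 - a i * \sum_k lam k * W k i ^+ 2.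
    by rewrite /G !mulr_sumr -sumrB; apply: eq_bigr => k _; ring.
  set S := \sum_k W k i ^+ 2; set S2 := \sum_k lam k * W k i ^+ 2.
  have e3 : a i * lam i * (S + v i) = a i * lam i by rewrite e' mulr1.
  rewrite -{1}e3; ring.
have hSG : 2 * (\sum_i \sum_k G i k) = \sum_i \sum_k (G i k + G k i).
  have ex : \sum_i \sum_k G k i = \sum_i \sum_k G i k by rewrite exchange_big.
  have -> : \sum_i \sum_k (G i k + G k i) = \sum_i \sum_k G i k + \sum_i \sum_k G k i.
    by rewrite -big_split; apply: eq_bigr => i _; rewrite big_split.
  by rewrite ex; lra.
have hlow : \sum_i \sum_k (2 * c0 * (O i k + O k i) - E) <= \sum_i \sum_k (G i k + G k i).
  by apply: ler_sum => i _; apply: ler_sum => k _; exact: hpair.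
have hO : \sum_i \sum_k (2 * c0 * (O i k + O k i) - E) =
    2 * c0 * (\sum_i \sum_k O i k + \sum_i \sum_k O k i) - K%:R * (K%:R * E).
  transitivity (\sum_i (2 * c0 * (\sum_k O i k + \sum_k O k i) - K%:R * E)).
    by apply: eq_bigr => i _; rewrite sum_lin card_ord.
  by rewrite sum_lin card_ord.
have ex2 : \sum_i \sum_k O k i = \sum_i \sum_k O i k by rewrite exchange_big.
have hOsum i : \sum_k O i k = T i - v i.
  by rewrite /O -big_mkcond /= hT addrK.
have hOT : \sum_i \sum_k O i k = Ts - \sum_i v i.
  by rewrite (eq_bigr _ (fun i _ => hOsum i)) sumrB.
have hav : 2 * c0 * \sum_i v i <= \sum_i a i * lam i * v i.
  rewrite mulr_sumr; apply: ler_sum => i _; apply: ler_wpM2r => //.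
have hlhs : c0 * \sum_i 2 * (1 - `|W i i|) <= c0 * (3 / 2 * Ts).
  apply: ler_wpM2l; first exact: ltW.
  rewrite /Ts mulr_sumr; apply: ler_sum => i _.
  have h3 := hW3 i; have h1 := hWii i; rewrite /T.
  have n1 : `|W i i| <= 1 by apply: abs_le_of_sq; rewrite ?expr1n.
  rewrite -(real_normK (num_real (W i i))) in h1 *.
  nra.
have hE : K%:R * (K%:R * E) <= c0 * Ts.
  rewrite /E.
  have -> : K%:R * (K%:R * (3 * lmax * amax * tau * Ts)) =
            3 * (K * K)%:R * lmax * amax * tau * Ts by rewrite natrM; ring.
  by apply: ler_wpM2r.
rewrite hgap; move: hSG hlow; rewrite hO ex2 hOT => hSG hlow.
lra.
Qed.
Lemma frob_sq {R : realType} m n (A : 'M[R]_(m, n)) :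
  frob A ^+ 2 = \sum_i \sum_j A i j ^+ 2.
Proof.
rewrite /frob sqr_sqrtr //; apply: sumr_ge0 => i _; apply: sumr_ge0 => j _.
exact: sqr_ge0.
Qed.

Lemma sumsq_tr {R : realType} m n (A : 'M[R]_(m, n)) :
  \sum_i \sum_j A i j ^+ 2 = \tr (A^T *m A).
Proof.
rewrite /mxtrace exchange_big; apply: eq_bigr => j _; rewrite !mxE.
by apply: eq_bigr => i _; rewrite mxE expr2.
Qed.

Lemma frob_ge0 {R : realType} {m n : nat} (A : 'M[R]_(m, n)) : 0 <= frob A.
Proof. exact: sqrtr_ge0. Qed.

Lemma trB {R : realType} m n (A B : 'M[R]_(m, n)) : (A - B)^T = A^T - B^T.
Proof. by apply/matrixP => i j; rewrite !mxE. Qed.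
Lemma trD {R : realType} m n (A B : 'M[R]_(m, n)) : (A + B)^T = A^T + B^T.
Proof. by apply/matrixP => i j; rewrite !mxE. Qed.
Lemma trZ {R : realType} m n (c : R) (A : 'M[R]_(m, n)) : (c *: A)^T = c *: A^T.
Proof. by apply/matrixP => i j; rewrite !mxE. Qed.

Lemma stiefel_WV {R : realType} {d K : nat} {Q X : 'M[R]_(d, K)} :
  stiefel Q -> stiefel X ->
  (Q^T *m X)^T *m (Q^T *m X) + (X - Q *m (Q^T *m X))^T *m (X - Q *m (Q^T *m X)) = 1%:M.
Proof.
rewrite /stiefel => hQ hX.
have e1 : (Q^T *m X)^T *m (Q^T *m X) = X^T *m (Q *m Q^T) *m X.
  by rewrite trmx_mul trmxK !mulmxA.
have e2 : (X - Q *m (Q^T *m X)) = X - (Q *m Q^T) *m X by rewrite mulmxA.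
have hP : (Q *m Q^T) *m (Q *m Q^T) = Q *m Q^T by rewrite mulmxA -[Q *m Q^T *m Q]mulmxA hQ mulmx1.
have hPt : (Q *m Q^T)^T = Q *m Q^T by rewrite trmx_mul trmxK.
rewrite e1 e2; set P := Q *m Q^T in hP hPt *.
rewrite trB trmx_mul hPt mulmxBl !mulmxBr hX.
rewrite !mulmxA -[X^T *m Q *m Q^T *m Q]mulmxA hQ mulmx1.
by rewrite subrr subr0 addrC subrK.
Qed.
Lemma stiefel_comp {R : realType} {d K : nat} {Q X : 'M[R]_(d, K)} (i j : 'I_K) :
  stiefel Q -> stiefel X ->
  \sum_m (Q^T *m X) m i * (Q^T *m X) m j +
  \sum_l (X - Q *m (Q^T *m X)) l i * (X - Q *m (Q^T *m X)) l j = (i == j)%:R.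
Proof.
move=> hQ hX; have := stiefel_WV hQ hX.
move/matrixP => /(_ i j); rewrite !mxE => <-.
by congr (_ + _); apply: eq_bigr => m _; rewrite !mxE.
Qed.

Lemma frob_diag {R : realType} d K (Q X : 'M[R]_(d, K)) (v : 'rV[R]_K) :
  stiefel Q -> stiefel X ->
  frob (X - Q *m diag_mx v) ^+ 2 =
  \sum_k (1 - 2 * (v 0 k * (Q^T *m X) k k) + v 0 k ^+ 2).
Proof.
rewrite /stiefel => hQ hX.
rewrite frob_sq sumsq_tr trB trmx_mul tr_diag_mx mulmxBl !mulmxBr hX.
have hWt : X^T *m Q = (Q^T *m X)^T by rewrite trmx_mul trmxK.
rewrite !mulmxA -[diag_mx v *m Q^T *m Q]mulmxA hQ mulmx1 mulmx_diag hWt.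
rewrite -[diag_mx v *m Q^T *m X]mulmxA mul_diag_mx mul_mx_diag.
rewrite /mxtrace; apply: eq_bigr => k _; rewrite !mxE eqxx /= !mulr1n.
ring.
Qed.
Lemma Theta2 {R : realType} K (lam : 'I_K -> R) :
  (forall i, 0 <= lam i) -> Theta lam *m Theta lam = diag_mx (\row_i lam i).
Proof.
move=> h; rewrite /Theta mulmx_diag; congr diag_mx.
by apply/rowP => j; rewrite !mxE -expr2 sqr_sqrtr.
Qed.

Lemma gfun_W {R : realType} d K (Q X : 'M[R]_(d, K)) (lam a : 'I_K -> R) :
  (forall i, 0 <= lam i) ->
  gfun Q lam a X = \sum_i a i * \sum_k lam k * (Q^T *m X) k i ^+ 2.
Proof.
move=> h; rewrite /gfun Theta2 // /diagA.
have hWt : X^T *m Q = (Q^T *m X)^T by rewrite trmx_mul trmxK.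
rewrite -[_ *m Q^T *m X]mulmxA hWt.
rewrite mul_mx_diag /mxtrace; apply: eq_bigr => i _; rewrite !mxE mulrC.
congr (_ * _); rewrite mul_mx_diag; apply: eq_bigr => k _; rewrite !mxE; ring.
Qed.

Lemma gfun_Q {R : realType} d K (Q : 'M[R]_(d, K)) (lam a : 'I_K -> R) :
  (forall i, 0 <= lam i) -> stiefel Q ->
  gfun Q lam a Q = \sum_i a i * lam i.
Proof.
move=> h hQ; rewrite gfun_W // hQ; apply: eq_bigr => i _; congr (_ * _).
rewrite (bigD1 i) //= big1 ?addr0; first by rewrite !mxE eqxx /= expr1n mulr1.
by move=> k ki; rewrite !mxE (negbTE ki) /= expr0n /= mulr0.
Qed.
Lemma W_diag_le1 {R : realType} {d K : nat} {Q X : 'M[R]_(d, K)} (k : 'I_K) :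
  stiefel Q -> stiefel X -> (Q^T *m X) k k ^+ 2 <= 1.
Proof.
move=> hQ hX; have := stiefel_comp k k hQ hX; rewrite eqxx /= => e.
have h1 : (Q^T *m X) k k ^+ 2 <= \sum_m (Q^T *m X) m k * (Q^T *m X) m k.
  rewrite (bigD1 k) //= expr2 lerDl; apply: sumr_ge0 => m _; rewrite -expr2; exact: sqr_ge0.
have h2 : 0 <= \sum_l (X - Q *m (Q^T *m X)) l k * (X - Q *m (Q^T *m X)) l k.
  by apply: sumr_ge0 => m _; rewrite -expr2; exact: sqr_ge0.
move: e; rewrite mulr1n => e; lra.
Qed.

Lemma W_diag_abs {R : realType} {d K : nat} {Q X : 'M[R]_(d, K)} (k : 'I_K) :
  stiefel Q -> stiefel X -> `|(Q^T *m X) k k| <= 1.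
Proof. move=> hQ hX; apply: abs_le_of_sq => //; rewrite expr1n; exact: (W_diag_le1 k hQ hX). Qed.

Lemma frob_sign {R : realType} d K (Q X : 'M[R]_(d, K)) (q : {ffun 'I_K -> bool}) :
  stiefel Q -> stiefel X ->
  frob (X - Q *m diag_mx (signvec R q)) ^+ 2 =
  \sum_k 2 * (1 - (if q k then -1 else 1) * (Q^T *m X) k k).
Proof.
move=> hQ hX; rewrite frob_diag //; apply: eq_bigr => k _; rewrite !mxE.
by case: (q k); ring.
Qed.

Lemma signvec_false {R : realType} K :
  diag_mx (signvec R [ffun _ : 'I_K => false]) = 1%:M :> 'M[R]_K.
Proof. by apply/matrixP => i j; rewrite !mxE ffunE. Qed.

Lemma sq_le_of_le {R : realType} (x y : R) : 0 <= x -> x <= y -> x ^+ 2 <= y ^+ 2.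
Proof. move=> *; nra. Qed.
Lemma le_of_sq_le {R : realType} (x y : R) : 0 <= y -> x ^+ 2 <= y ^+ 2 -> x <= y.
Proof. move=> *; nra. Qed.

Lemma dF_sq {R : realType} d K (Q X : 'M[R]_(d, K)) :
  stiefel Q -> stiefel X ->
  dF X Q ^+ 2 = \sum_k 2 * (1 - `|(Q^T *m X) k k|).
Proof.
move=> hQ hX.
set S := \sum_k 2 * (1 - `|(Q^T *m X) k k|).
have S0 : 0 <= S.
  apply: sumr_ge0 => k _; have := W_diag_abs k hQ hX; lra.
have hf q : S <= frob (X - Q *m diag_mx (signvec R q)) ^+ 2.
  rewrite frob_sign //; apply: ler_sum => k _.
  have := W_diag_abs k hQ hX.
  have := ler_norm ((Q^T *m X) k k); have := ler_norm (- (Q^T *m X) k k).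
  rewrite normrN; case: (q k); lra.
have hb q : Num.sqrt S <= frob (X - Q *m diag_mx (signvec R q)).
  apply: le_of_sq_le; first exact: frob_ge0.
  by rewrite sqr_sqrtr.
have lo : Num.sqrt S <= dF X Q.
  apply: le_bigmin => [|q _]; last exact: hb.
  by have := hb [ffun => false]; rewrite signvec_false mulmx1.
pose qs := [ffun k => (Q^T *m X) k k < 0].
have hqs : frob (X - Q *m diag_mx (signvec R qs)) ^+ 2 = S.
  rewrite frob_sign //; apply: eq_bigr => k _; rewrite ffunE.
  case: ltrP => h.
    by rewrite (ltr0_norm h); ring.
  by rewrite (ger0_norm h); ring.
have up : dF X Q <= frob (X - Q *m diag_mx (signvec R qs)) by apply: bigmin_le.
have d0 : 0 <= dF X Q by apply: le_trans lo; exact: sqrtr_ge0.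
apply/eqP; rewrite eq_le; apply/andP; split.
  by rewrite -hqs; apply: sq_le_of_le.
by rewrite -[S]sqr_sqrtr //; apply: sq_le_of_le => //; exact: sqrtr_ge0.
Qed.
Lemma rgrad_formula {R : realType} d K (Q Z : 'M[R]_(d, K)) (lam a : 'I_K -> R) :
  (forall i, 0 <= lam i) -> stiefel Z ->
  let L := diag_mx (\row_i lam i) in
  let A := diagA a in
  let W := Q^T *m Z in
  let H := W^T *m (L *m W) in
  rgrad Q lam a Z = 2%:R *: (Q *m (L *m (W *m A))) - Z *m (A *m H + H *m A).
Proof.
move=> hl hZ L A W H.
have hLt : L^T = L by rewrite tr_diag_mx.
have hAt : A^T = A by rewrite /A /diagA tr_diag_mx.
set N := Q *m (L *m (W *m A)).
have eG : egrad Q lam a Z = 2%:R *: N.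
  by rewrite /egrad Theta2 // -/L /N /W -/A !mulmxA.
have hWt : W^T = Z^T *m Q by rewrite /W trmx_mul trmxK.
have eZN : Z^T *m N = H *m A.
  by rewrite /N /H hWt !mulmxA.
have eNt : Z *m N^T *m Z = Z *m (A *m H).
  by rewrite /N !trmx_mul trmxK hAt hLt /H /W !trmx_mul trmxK !mulmxA.
rewrite /rgrad eG trZ -scalemxAr -scalemxAl eNt.
rewrite mulmxBl mul1mx.
rewrite -scalemxAl mulmxBr -!scalemxAr -!mulmxA eZN [Z^T *m (Z *m _)]mulmxA hZ mul1mx.
rewrite scalerBr !scalerA mulVf ?pnatr_eq0 // !scale1r mulmxDr.
set P := Z *m (A *m H); set S := Z *m (H *m A).
have eS : Z *m (W^T *m (L *m (Q^T *m (Z *m A)))) = S by rewrite /S /H /W !mulmxA.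
rewrite eS !scaler_nat !mulr2n.
by rewrite opprB !opprD !addrA subrK.
Qed.
Lemma frob_split {R : realType} d K (Q : 'M[R]_(d, K)) (u : 'cV[R]_d)
  (C : 'M[R]_K) (y : 'rV[R]_K) :
  Q^T *m Q = 1%:M -> Q^T *m u = 0 -> u^T *m u = 1%:M ->
  frob (Q *m C + u *m y) ^+ 2 = \sum_i \sum_j C i j ^+ 2 + \sum_i \sum_j y i j ^+ 2.
Proof.
move=> hQ hQu hu.
have huQ : u^T *m Q = 0 by rewrite -[u^T *m Q]trmxK trmx_mul trmxK hQu linear0.
rewrite frob_sq !sumsq_tr trD !trmx_mul mulmxDl !mulmxDr.
rewrite -!mulmxA [Q^T *m (Q *m _)]mulmxA hQ mul1mx [Q^T *m (u *m _)]mulmxA hQu mul0mx mulmx0.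
rewrite [u^T *m (Q *m _)]mulmxA huQ mul0mx mulmx0 [u^T *m (u *m _)]mulmxA hu mul1mx.
by rewrite addr0 add0r mxtraceD.
Qed.

Lemma rgrad_test {R : realType} d K (Q : 'M[R]_(d, K)) (u : 'cV[R]_d)
  (M : 'M[R]_K) (r : 'rV[R]_K) (lam a : 'I_K -> R) :
  (forall i, 0 <= lam i) ->
  Q^T *m Q = 1%:M -> Q^T *m u = 0 -> u^T *m u = 1%:M ->
  stiefel (Q *m M + u *m r) ->
  let L := diag_mx (\row_i lam i) in
  let A := diagA a in
  let H := M^T *m (L *m M) in
  let S := A *m H + H *m A in
  frob (rgrad Q lam a (Q *m M + u *m r)) ^+ 2 =
    \sum_i \sum_j (2%:R *: (L *m (M *m A)) - M *m S) i j ^+ 2 +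
    \sum_i \sum_j (r *m S) i j ^+ 2.
Proof.
move=> hl hQ hQu hu hZ L A H S.
rewrite rgrad_formula //.
have hW : Q^T *m (Q *m M + u *m r) = M.
  by rewrite mulmxDr !mulmxA hQ hQu mul1mx mul0mx addr0.
rewrite hW -/L -/A -/H -/S.
have -> : 2%:R *: (Q *m (L *m (M *m A))) - (Q *m M + u *m r) *m S =
    Q *m (2%:R *: (L *m (M *m A)) - M *m S) + u *m (- (r *m S)).
  rewrite mulmxBr mulmxDl scalemxAr mulmxN !mulmxA opprD addrA; done.
rewrite frob_split //; congr (_ + _).
by apply: eq_bigr => i _; apply: eq_bigr => j _; rewrite mxE sqrrN.
Qed.
Lemma exists_perp {R : realType} d K (Q : 'M[R]_(d, K)) :
  (K < d)%N -> exists u : 'cV[R]_d, Q^T *m u = 0 /\ u^T *m u = 1%:M.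
Proof.
move=> Kd.
have hr : (0 < \rank (kermx Q))%N.
  rewrite mxrank_ker subn_gt0; apply: leq_ltn_trans Kd; exact: rank_leq_col.
have : kermx Q != 0 by rewrite -mxrank_eq0 -lt0n.
case/matrix0Pn => i [j hij].
set w := row i (kermx Q).
have hwQ : w *m Q = 0 by rewrite /w -row_mul mulmx_ker row0.
set n2 := \sum_l w 0 l ^+ 2.
have n2p : 0 < n2.
  have h1 : w 0 j ^+ 2 <= n2 by apply: le_sum_term => l; exact: sqr_ge0.
  have h2 : 0 < w 0 j ^+ 2 by rewrite exprn_even_gt0 //= /w mxE.
  exact: lt_le_trans h2 h1.
set c := (Num.sqrt n2)^-1.
exists (c *: w^T); split.
  have e : Q^T *m w^T = (w *m Q)^T by rewrite trmx_mul.
  by rewrite -scalemxAr e hwQ linear0 scaler0.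
rewrite trZ trmxK.
apply/matrixP => p q; rewrite !ord1 !mxE eqxx /= mulr1n.
have -> : \sum_l (c *: w) 0 l * (c *: w^T) l 0 = c ^+ 2 * n2.
  by rewrite /n2 mulr_sumr; apply: eq_bigr => l _; rewrite !mxE; ring.
rewrite /c exprVn sqr_sqrtr ?ltW // mulVf //; exact: lt0r_neq0.
Qed.
Lemma ZtZ {R : realType} d K (Q : 'M[R]_(d, K)) (u : 'cV[R]_d)
  (M : 'M[R]_K) (r : 'rV[R]_K) :
  Q^T *m Q = 1%:M -> Q^T *m u = 0 -> u^T *m u = 1%:M ->
  (Q *m M + u *m r)^T *m (Q *m M + u *m r) = M^T *m M + r^T *m r.
Proof.
move=> hQ hQu hu.
have huQ : u^T *m Q = 0.
  have e : u^T *m Q = (Q^T *m u)^T by rewrite trmx_mul trmxK.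
  by rewrite e hQu linear0.
rewrite trD !trmx_mul mulmxDl !mulmxDr.
rewrite -!mulmxA [Q^T *m (Q *m _)]mulmxA hQ mul1mx [Q^T *m (u *m _)]mulmxA hQu mul0mx mulmx0.
rewrite [u^T *m (Q *m _)]mulmxA huQ mul0mx mulmx0 [u^T *m (u *m _)]mulmxA hu mul1mx.
by rewrite addr0 add0r.
Qed.

Lemma sumsq_diag {R : realType} K (v : 'rV[R]_K) :
  \sum_p \sum_q (diag_mx v) p q ^+ 2 = \sum_p v 0 p ^+ 2.
Proof.
apply: eq_bigr => p _; rewrite (bigD1 p) //= big1 ?addr0; first by rewrite mxE eqxx mulr1n.
by move=> q qp; rewrite mxE eq_sym (negbTE qp) mulr0n expr0n.
Qed.

Lemma sum_single {R : realType} K (f : 'I_K -> R) (i : 'I_K) :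
  (forall p, p != i -> f p = 0) -> \sum_p f p = f i.
Proof. by move=> h; rewrite (bigD1 i) //= big1 ?addr0. Qed.

Lemma dF_ge0 {R : realType} d K (X Q : 'M[R]_(d, K)) : 0 <= dF X Q.
Proof. by apply: le_bigmin => [|q _]; exact: frob_ge0. Qed.

Lemma diag_mxD' {R : realType} K (v w : 'rV[R]_K) : diag_mx v + diag_mx w = diag_mx (v + w).
Proof. by apply/matrixP => p q; rewrite !mxE mulrnDl. Qed.
Lemma diag_mxB' {R : realType} K (v w : 'rV[R]_K) : diag_mx v - diag_mx w = diag_mx (v - w).
Proof. by apply/matrixP => p q; rewrite !mxE mulrnBl. Qed.
Lemma diag_mxZ' {R : realType} K (x : R) (v : 'rV[R]_K) : x *: diag_mx v = diag_mx (x *: v).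
Proof. by apply/matrixP => p q; rewrite !mxE mulrnAr. Qed.

Lemma perp_test {R : realType} d K (Q : 'M[R]_(d, K)) (u : 'cV[R]_d)
  (lam a : 'I_K -> R) (i : 'I_K) (c s delta3 eta : R) :
  (forall i, 0 <= lam i) -> stiefel Q -> Q^T *m u = 0 -> u^T *m u = 1%:M ->
  0 < c -> c < 1 -> 0 < s -> c ^+ 2 + s ^+ 2 = 1 -> 2 * (1 - c) <= delta3 ^+ 2 ->
  0 <= delta3 -> 0 < eta ->
  (forall X : 'M[R]_(d, K), stiefel X -> dF X Q <= delta3 ->
      dF X Q <= eta * frob (rgrad Q lam a X)) ->
  1 <= (2 * eta * (a i * lam i)) ^+ 2.
Proof.
move=> hl hQ hQu hu c0 c1 s0 hcs hd d30 eta0 hyp.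
pose mv : 'rV[R]_K := \row_l (if l == i then c else 1).
pose rv : 'rV[R]_K := \row_l (if l == i then s else 0).
pose Z := Q *m diag_mx mv + u *m rv.
have hZ : stiefel Z.
  rewrite /stiefel /Z ZtZ // tr_diag_mx mulmx_diag.
  apply/matrixP => p q; rewrite !mxE big_ord1 !mxE.
  case: (eqVneq p q) => [<-|pq].
    rewrite /= !mulr1n; case: (p == i); last by rewrite mulr1 mulr0 addr0.
    by rewrite -!expr2 hcs.
  rewrite /= !mulr0n add0r.
  case: (eqVneq p i) => [epi|pi]; last by rewrite mul0r.
  by case: (eqVneq q i) => [eqi|qi]; [move: pq; rewrite epi eqi eqxx | rewrite mulr0].
have hW : Q^T *m Z = diag_mx mv.
  by rewrite /Z mulmxDr !mulmxA hQ hQu mul1mx mul0mx addr0.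
have hdF : dF Z Q ^+ 2 = 2 * (1 - c).
  rewrite dF_sq // hW (bigD1 i) //= big1 ?addr0.
    by rewrite mxE eqxx mulr1n mxE eqxx ger0_norm ?ltW.
  by move=> p pi; rewrite mxE eqxx mulr1n mxE (negbTE pi) normr1 subrr mulr0.
have hg : frob (rgrad Q lam a Z) ^+ 2 = (2 * (lam i * a i * c * s)) ^+ 2.
  rewrite /Z rgrad_test // /diagA !tr_diag_mx !mulmx_diag diag_mxD' diag_mxZ' mulmx_diag diag_mxB'.
  rewrite sumsq_diag mul_mx_diag big_ord1.
  rewrite (bigD1 i) //= big1 ?addr0; last first.
    by move=> p pi; rewrite !mxE (negbTE pi); ring.
  rewrite (bigD1 i) //= big1 ?addr0; last first.
    by move=> p pi; rewrite !mxE (negbTE pi); ring.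
  rewrite !mxE eqxx.
  have -> : (2 * (lam i * a i * c * s)) ^+ 2 = 4 * lam i ^+ 2 * a i ^+ 2 * c ^+ 2 * s ^+ 2 * (c ^+ 2 + s ^+ 2).
    by rewrite hcs; ring.
  rewrite [(s * _) ^+ 2]exprMn.
  have -> : s ^+ 2 = 1 - c ^+ 2 by rewrite -hcs; ring.
  ring.
have dZ0 := @dF_ge0 _ _ _ Z Q.
have hle : dF Z Q <= delta3 by apply: le_of_sq_le => //; rewrite hdF.
have h := hyp Z hZ hle.
have g0 := frob_ge0 (rgrad Q lam a Z).
have h2 : dF Z Q ^+ 2 <= (eta * frob (rgrad Q lam a Z)) ^+ 2 by apply: sq_le_of_le.
rewrite hdF exprMn hg in h2.
set P := (2 * eta * (a i * lam i)) ^+ 2.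
have P0 : 0 <= P by apply: sqr_ge0.
have eP : eta ^+ 2 * (2 * (lam i * a i * c * s)) ^+ 2 = P * (c * s) ^+ 2 by rewrite /P; ring.
rewrite eP in h2.
have hcs2 : (c * s) ^+ 2 <= 2 * (1 - c).
  have e : (c * s) ^+ 2 = c ^+ 2 * (1 - c ^+ 2) by rewrite -hcs; ring.
  rewrite e; nra.
have h3 : P * (c * s) ^+ 2 <= P * (2 * (1 - c)) by apply: ler_wpM2l.
have x0 : 0 < 2 * (1 - c) by lra.
have h4 : 1 * (2 * (1 - c)) <= P * (2 * (1 - c)) by rewrite mul1r; lra.
by rewrite ler_pM2r in h4.
Qed.
Definition rotf {R : realType} {K : nat} (i k : 'I_K) (c s : R) (m p : 'I_K) : R :=
  if p == i then c * (m == i)%:R + s * (m == k)%:R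
  else if p == k then - s * (m == i)%:R + c * (m == k)%:R
  else (m == p)%:R.

Lemma sum_two {R : realType} K (f : 'I_K -> R) (i k : 'I_K) :
  i != k -> (forall m, m != i -> m != k -> f m = 0) -> \sum_m f m = f i + f k.
Proof.
move=> ik h; rewrite (bigD1 i) //= (bigD1 k) /=; last by rewrite eq_sym.
by rewrite big1 ?addr0 // => m /andP[mi mk]; apply: h.
Qed.

Lemma rot_out {R : realType} {K : nat} {i k : 'I_K} {c s : R} {m p : 'I_K} :
  p != i -> p != k -> rotf i k c s m p = (m == p)%:R.
Proof. by move=> pi pk; rewrite /rotf (negbTE pi) (negbTE pk). Qed.

Lemma rot_zero {R : realType} {K : nat} {i k : 'I_K} {c s : R} {m p : 'I_K} :
  m != i -> m != k -> (p == i) || (p == k) -> rotf i k c s m p = 0.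
Proof.
move=> mi mk; rewrite /rotf (negbTE mi) (negbTE mk) /=.
by case: (p == i) => /=; [|case: (p == k)]; rewrite // ?mulr0 ?addr0.
Qed.

Lemma rot_gram {R : realType} {K : nat} (i k : 'I_K) (c s : R) (w : 'I_K -> R) (p q : 'I_K) :
  i != k ->
  \sum_m rotf i k c s m p * (w m * rotf i k c s m q) =
  if (p == i) || (p == k) then
    (if (q == i) || (q == k) then
       rotf i k c s i p * (w i * rotf i k c s i q) + rotf i k c s k p * (w k * rotf i k c s k q)
     else 0)
  else w p * (p == q)%:R.
Proof.
move=> ik.
case: (boolP ((p == i) || (p == k))) => hp.
  case: (boolP ((q == i) || (q == k))) => hq.
    by apply: sum_two => // m mi mk; rewrite rot_zero // mul0r.
  have qi : q != i by move: hq; case: (q == i).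
  have qk : q != k by move: hq; case: (q == k); rewrite ?orbT.
  rewrite (bigD1 q) //= big1 ?addr0.
    by rewrite rot_zero // mul0r.
  by move=> m mq; rewrite (rot_out qi qk) (negbTE mq) !mulr0.
have pi : p != i by move: hp; case: (p == i).
have pk : p != k by move: hp; case: (p == k); rewrite ?orbT.
rewrite (bigD1 p) //= big1 ?addr0.
  rewrite (rot_out pi pk) eqxx mul1r; congr (_ * _).
  case: (boolP ((q == i) || (q == k))) => hq.
    rewrite rot_zero //.
    have -> : (p == q) = false.
      by apply/negbTE; apply/eqP => epq; move: hp; rewrite epq hq.
    by [].
  have qi : q != i by move: hq; case: (q == i).
  have qk : q != k by move: hq; case: (q == k); rewrite ?orbT.
  by rewrite rot_out.
by move=> m mp; rewrite (rot_out pi pk) (negbTE mp) mul0r.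
Qed.
Lemma pair_test {R : realType} d K (Q : 'M[R]_(d, K)) (u : 'cV[R]_d)
  (lam a : 'I_K -> R) (i k : 'I_K) (c s delta3 eta : R) :
  (forall i, 0 <= lam i) -> stiefel Q -> Q^T *m u = 0 -> u^T *m u = 1%:M ->
  (i < k)%N ->
  0 < c -> c < 1 -> 0 < s -> c ^+ 2 + s ^+ 2 = 1 -> 4 * (1 - c) <= delta3 ^+ 2 ->
  0 <= delta3 -> 0 < eta ->
  (forall X : 'M[R]_(d, K), stiefel X -> dF X Q <= delta3 ->
      dF X Q <= eta * frob (rgrad Q lam a X)) ->
  1 <= (eta * ((lam i - lam k) * (a i - a k))) ^+ 2.
Proof.
move=> hl hQ hQu hu lik c0 c1 s0 hcs hd d30 eta0 hyp.
have ik : i != k by rewrite neq_ltn lik.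
have ki : k != i by rewrite eq_sym.
pose Mm : 'M[R]_K := \matrix_(m, p) rotf i k c s m p.
have rii : rotf i k c s i i = c by rewrite /rotf !eqxx (negbTE ik) /=; ring.
have rki : rotf i k c s k i = s by rewrite /rotf !eqxx (negbTE ki) /=; ring.
have rik : rotf i k c s i k = - s by rewrite /rotf !eqxx (negbTE ki) (negbTE ik) /=; ring.
have rkk : rotf i k c s k k = c by rewrite /rotf !eqxx (negbTE ki) /=; ring.
have gram (w : 'I_K -> R) p q :
    (Mm^T *m (diag_mx (\row_m w m) *m Mm)) p q =
    \sum_m rotf i k c s m p * (w m * rotf i k c s m q).
  by rewrite mul_diag_mx !mxE; apply: eq_bigr => m _; rewrite !mxE.
have hMM : Mm^T *m Mm = 1%:M.
  apply/matrixP => p q.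
  have -> : (Mm^T *m Mm) p q = \sum_m rotf i k c s m p * ((fun _ => 1) m * rotf i k c s m q).
    by rewrite !mxE; apply: eq_bigr => m _; rewrite !mxE mul1r.
  rewrite rot_gram // mxE.
  case: (eqVneq p i) => [->|pi]; [|case: (eqVneq p k) => [->|pk]].
  - case: (eqVneq q i) => [->|qi]; [|case: (eqVneq q k) => [->|qk]].
    + by rewrite /= rii rki mulr1n !mul1r -!expr2 hcs.
    + by rewrite /= rii rki rik rkk ?mulr0n; ring.
    + by rewrite /= ?(negbTE qi) ?(negbTE qk) ?mulr0n.
  - case: (eqVneq q i) => [->|qi]; [|case: (eqVneq q k) => [->|qk]].
    + by rewrite /= rii rki rik rkk (negbTE ki) mulr0n; ring.
    + by rewrite /= rik rkk mulr1n !mul1r mulrNN -!expr2 addrC hcs.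
    + by rewrite /= ?(negbTE qi) ?(negbTE qk) ?mulr0n.
  - by rewrite /= mul1r.
pose Z := Q *m Mm + u *m (0 : 'rV[R]_K).
have hZ : stiefel Z by rewrite /stiefel /Z ZtZ // hMM mulmx0 addr0.
have hW : Q^T *m Z = Mm by rewrite /Z mulmx0 addr0 mulmxA hQ mul1mx.
have hMd m : m != i -> m != k -> Mm m m = 1.
  by move=> mi mk; rewrite mxE rot_out // eqxx.
have hdF : dF Z Q ^+ 2 = 4 * (1 - c).
  rewrite dF_sq // hW (bigD1 i) //= (bigD1 k) /=; last by rewrite eq_sym.
  rewrite big1 ?addr0; last by move=> m /andP[mi mk]; rewrite hMd // normr1 subrr mulr0.
  by rewrite !mxE rii rkk ger0_norm ?ltW //; ring.
pose Hf p q := \sum_m rotf i k c s m p * (lam m * rotf i k c s m q).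
have hg : frob (rgrad Q lam a Z) ^+ 2 =
    \sum_p \sum_q (Hf p q * (a q - a p)) ^+ 2.
  rewrite /Z rgrad_test //.
  set L := diag_mx (\row_i lam i).
  set A := diagA a.
  set H := Mm^T *m (L *m Mm).
  have -> : \sum_i0 \sum_j ((0 : 'rV[R]_K) *m (A *m H + H *m A)) i0 j ^+ 2 = 0.
    by rewrite mul0mx big1 // => p _; rewrite big1 // => q _; rewrite mxE expr0n.
  rewrite addr0.
  have hMMt : Mm *m Mm^T = 1%:M by apply: mulmx1C.
  have hLM : L *m Mm = Mm *m H by rewrite /H !mulmxA hMMt mul1mx.
  have -> : 2%:R *: (L *m (Mm *m A)) - Mm *m (A *m H + H *m A) =
            Mm *m (H *m A - A *m H).
    rewrite mulmxA hLM -mulmxA mulmxBr mulmxDr scaler_nat mulr2n opprD.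
    by rewrite addrACA subrr addr0.
  rewrite !sumsq_tr trmx_mul -mulmxA [Mm^T *m (Mm *m _)]mulmxA hMM mul1mx -sumsq_tr.
  apply: eq_bigr => p _; apply: eq_bigr => q _.
  rewrite /A /diagA mul_mx_diag mul_diag_mx !mxE /H /L.
  have eH : (\sum_j Mm^T p j * (diag_mx (\row_i0 lam i0) *m Mm) j q) = Hf p q.
    by rewrite /Hf -(gram lam p q) mxE.
  rewrite eH; congr (_ ^+ 2); ring.
have sq0 (x : R) : (0 * x) ^+ 2 = 0 by rewrite mul0r expr2 mul0r.
have Hout p q : p != i -> p != k -> Hf p q = lam p * (p == q)%:R.
  by move=> pi pk; rewrite /Hf rot_gram // (negbTE pi) (negbTE pk).
have Hout2 p q : q != i -> q != k -> (p == i) || (p == k) -> Hf p q = 0.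
  by move=> qi qk hp; rewrite /Hf rot_gram // hp (negbTE qi) (negbTE qk).
have inner_i : \sum_q (Hf i q * (a q - a i)) ^+ 2 = (Hf i k * (a k - a i)) ^+ 2.
  rewrite (bigD1 i) //= subrr mulr0 expr2 mulr0 add0r.
  rewrite (bigD1 k) /=; last by rewrite eq_sym.
  rewrite big1 ?addr0 // => q /andP[qi qk]; rewrite Hout2 ?eqxx //; exact: sq0.
have inner_k : \sum_q (Hf k q * (a q - a k)) ^+ 2 = (Hf k i * (a i - a k)) ^+ 2.
  rewrite (bigD1 i) //= (bigD1 k) /=; last by rewrite eq_sym.
  rewrite subrr mulr0 [0 ^+ 2]expr2 mulr0 add0r.
  rewrite big1 ?addr0 // => q /andP[qi qk]; rewrite Hout2 ?eqxx ?orbT //; exact: sq0.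
have hsum : \sum_p \sum_q (Hf p q * (a q - a p)) ^+ 2 =
    (Hf i k * (a k - a i)) ^+ 2 + (Hf k i * (a i - a k)) ^+ 2.
  rewrite (bigD1 i) //= [X in _ + X](bigD1 k) /=; last by rewrite eq_sym.
  rewrite inner_i inner_k big1 ?addr0 // => p /andP[pi pk].
  apply: big1 => q _; rewrite Hout //.
  case: (eqVneq p q) => [<-|pq]; first by rewrite subrr mulr0 expr2 mulr0.
  by rewrite mulr0n mulr0; exact: sq0.
have Hik : Hf i k = c * s * (lam k - lam i).
  by rewrite /Hf rot_gram // !eqxx ?orbT /= rii rik rki rkk; ring.
have Hki : Hf k i = c * s * (lam k - lam i).
  by rewrite /Hf rot_gram // !eqxx ?orbT /= rii rik rki rkk; ring.
rewrite hsum Hik Hki in hg.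
have dZ0 := @dF_ge0 _ _ _ Z Q.
have hle : dF Z Q <= delta3 by apply: le_of_sq_le => //; rewrite hdF.
have h := hyp Z hZ hle.
have g0 := frob_ge0 (rgrad Q lam a Z).
have h2 : dF Z Q ^+ 2 <= (eta * frob (rgrad Q lam a Z)) ^+ 2 by apply: sq_le_of_le.
rewrite hdF exprMn hg in h2.
set P := (eta * ((lam i - lam k) * (a i - a k))) ^+ 2.
have P0 : 0 <= P by apply: sqr_ge0.
have eP : eta ^+ 2 * ((c * s * (lam k - lam i) * (a k - a i)) ^+ 2 +
     (c * s * (lam k - lam i) * (a i - a k)) ^+ 2) = P * (2 * (c * s) ^+ 2) by rewrite /P; ring.
rewrite eP in h2.
have hcs2 : (c * s) ^+ 2 <= 2 * (1 - c).
  have e : (c * s) ^+ 2 = c ^+ 2 * (1 - c ^+ 2) by rewrite -hcs; ring.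
  rewrite e; nra.
have h3 : P * (2 * (c * s) ^+ 2) <= P * (4 * (1 - c)) by apply: ler_wpM2l => //; lra.
have x0 : 0 < 4 * (1 - c) by lra.
have h4 : 1 * (4 * (1 - c)) <= P * (4 * (1 - c)) by rewrite mul1r; lra.
by rewrite ler_pM2r in h4.
Qed.
Theorem lemma6 (R : realType) (d K : nat) (Q : 'M[R]_(d, K))
  (lam a : 'I_K -> R) (delta3 eta : R) :
  (1 <= K)%N -> (K < d)%N ->
  stiefel Q ->
  (forall i j : 'I_K, (i < j)%N -> lam j < lam i) -> (forall i, 0 < lam i) ->
  (forall i j : 'I_K, (i < j)%N -> a j < a i) -> (forall i, 0 < a i) ->
  0 < delta3 -> delta3 < Num.sqrt 2 / 2 -> 0 < eta ->
  (forall X : 'M[R]_(d, K), stiefel X -> dF X Q <= delta3 ->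
      dF X Q <= eta * frob (rgrad Q lam a X)) ->
  exists beta1 : R, 0 < beta1 /\ beta1 < 2 / 3 * delta3 /\
    forall X : 'M[R]_(d, K), stiefel X -> dF X Q <= beta1 ->
      gfun Q lam a Q - gfun Q lam a X >= (4 * eta)^-1 * (dF X Q) ^+ 2.
Proof.
move=> hK hKd hQ hlam lam0 ha a0 d0 d3 eta0 hyp.
have lam0' : forall i, 0 <= lam i by move=> i; apply: ltW.
have [u [hQu hu]] := exists_perp d K Q hKd.
have s2 : Num.sqrt 2 ^+ 2 = 2 :> R by rewrite sqr_sqrtr // ler0n.
have s2p : 0 <= Num.sqrt 2 :> R := sqrtr_ge0 2.
have dsq : delta3 ^+ 2 < 1 / 2 by nra.
have dsq0 : 0 < delta3 ^+ 2 by apply: exprn_gt0.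
pose c := 1 - delta3 ^+ 2 / 4.
have cp : 0 < c by rewrite /c; lra.
have c1 : c < 1 by rewrite /c; lra.
have hc2 : 0 < 1 - c ^+ 2 by nra.
pose s := Num.sqrt (1 - c ^+ 2).
have s0 : 0 < s by rewrite sqrtr_gt0.
have hcs : c ^+ 2 + s ^+ 2 = 1 by rewrite sqr_sqrtr ?ltW //; ring.
pose c0 := (4 * eta)^-1.
have c00 : 0 < c0 by rewrite invr_gt0 mulr_gt0.
have hc0 : c0 * (4 * eta) = 1 by rewrite mulVf // lt0r_neq0 // mulr_gt0.
have hc1 i : 2 * c0 <= a i * lam i.
  have hd : 2 * (1 - c) <= delta3 ^+ 2 by rewrite /c; lra.
  have h := perp_test d K Q u lam a i c s delta3 eta lam0' hQ hQu hu cp c1 s0 hcs hd (ltW d0) eta0 hyp.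
  have x0 : 0 < 2 * eta * (a i * lam i) by rewrite !mulr_gt0.
  have h1 : 1 <= 2 * eta * (a i * lam i) by nra.
  have e2 : c0 * (4 * eta) * (a i * lam i) = a i * lam i by rewrite hc0 mul1r.
  nra.
have hc2' (i j : 'I_K) : (i < j)%N -> 4 * c0 <= (lam i - lam j) * (a i - a j).
  move=> lij.
  have hd : 4 * (1 - c) <= delta3 ^+ 2 by rewrite /c; lra.
  have h := pair_test d K Q u lam a i j c s delta3 eta lam0' hQ hQu hu lij cp c1 s0 hcs hd (ltW d0) eta0 hyp.
  have D0 : 0 < (lam i - lam j) * (a i - a j).
    by rewrite mulr_gt0 // subr_gt0; [apply: hlam | apply: ha].
  have x0 : 0 < eta * ((lam i - lam j) * (a i - a j)) by rewrite mulr_gt0.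
  have h1 : 1 <= eta * ((lam i - lam j) * (a i - a j)) by nra.
  have e2 : c0 * (4 * eta) * ((lam i - lam j) * (a i - a j)) = (lam i - lam j) * (a i - a j).
    by rewrite hc0 mul1r.
  nra.
pose i0 : 'I_K := Ordinal hK.
have lmax0 : 0 < \sum_i lam i.
  apply: lt_le_trans (lam0 i0) _; apply: le_sum_term => j; exact: lam0'.
have amax0 : 0 < \sum_i a i.
  apply: lt_le_trans (a0 i0) _; apply: le_sum_term => j; exact: ltW (a0 j).
pose Cst := 3 * (K * K)%:R * (\sum_i lam i) * (\sum_i a i).
have Kp : 0 < (K * K)%:R :> R by rewrite ltr0n muln_gt0 hK.
have Cst0 : 0 < Cst.
  have h3p : 0 < 3 :> R by lra.
  exact: (mulr_gt0 (mulr_gt0 (mulr_gt0 h3p Kp) lmax0) amax0).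
pose t := c0 / (Cst + c0).
have Cc0 : 0 < Cst + c0 by lra.
have ht : t * (Cst + c0) = c0 by rewrite /t mulfVK // lt0r_neq0.
have t0 : 0 < t by rewrite /t divr_gt0.
have t1 : t < 1 by nra.
have tC : t * Cst <= c0 by nra.
pose beta := delta3 / 2 * t.
have d1 : delta3 < 1 by nra.
have b0 : 0 < beta by rewrite /beta !mulr_gt0 // invr_gt0.
have b1 : beta <= 1 by rewrite /beta; nra.
have bC : Cst * beta <= c0 by rewrite /beta; nra.
exists beta; split => //; split; first by rewrite /beta; nra.
move=> X hX hdX.
set W := Q^T *m X.
have hdF := dF_sq d K Q X hQ hX.
have dX0 := @dF_ge0 _ _ _ X Q.
have hsq : dF X Q ^+ 2 <= beta ^+ 2 by apply: sq_le_of_le.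
have hWa k : `|W k k| <= 1 by apply: W_diag_abs.
have hk k : 2 * (1 - `|W k k|) <= beta ^+ 2.
  apply: le_trans hsq; rewrite hdF; apply: (le_sum_term _ (fun k => 2 * (1 - `|W k k|))) => j.
  by have := hWa j; lra.
have hT k : 1 - W k k ^+ 2 <= beta ^+ 2.
  have := hk k; have := hWa k; have := normr_ge0 (W k k).
  rewrite -(real_normK (num_real (W k k))); nra.
have h3 k : 1 / 3 <= `|W k k|.
  have := hk k; have : beta ^+ 2 <= 1 by nra.
  lra.
rewrite hdF gfun_Q // gfun_W //.
apply: (@partC R K d W (X - Q *m W) lam a c0 beta).
- by move=> i j; apply: stiefel_comp.
- exact: hlam.
- exact: lam0.
- exact: ha.
- exact: a0.
- exact: c00.
- exact: hc1.
- exact: hc2'.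
- by rewrite (ltW b0) b1.
- exact: hT.
- exact: h3.
- exact: bC.
Qed.
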